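(* For every integer $k>2$, $N(2k+6,k)=2$ if $k\equiv1\pmod 3$ and $N(2k+6,k)=0$ if $k\not\equiv1\pmod3$.
   Context: For $n>k\ge1$, $N(n,k)$ is the nullity of the $n\times n$ skew-symmetric Toeplitz matrix $A(n,k)$ whose first $k$ superdiagonals have all entries $1$ and whose remaining superdiagonals have all entries $0$. *)

(* Defs.v *)
From mathcomp Require Import all_boot all_order all_algebra.
Set Implicit Arguments. Unset Strict Implicit. Unset Printing Implicit Defensive.
Import GRing.Theory Num.Theory.
Local Open Scope ring_scope.

Definition Amx (R : realFieldType) (n k : nat) : 'M[R]_n :=
  \matrix_(i < n, j < n)
    (if ((i < j)%N && (j <= i + k)%N) then 1
     else if ((j < i)%N && (i <= j + k)%N) then -1 else 0).

Definition Nnull (R : realFieldType) (n k : nat) : nat := (n - \rank (Amx R n k))%N.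

(* Main.v *)
Require Import Defs.
From mathcomp Require Import all_boot all_order all_algebra.
From mathcomp Require Import zify ring lra.
Set Implicit Arguments. Unset Strict Implicit. Unset Printing Implicit Defensive.
Import GRing.Theory Num.Theory.
Local Open Scope ring_scope.

Lemma sum_delta (R : realFieldType) (n : nat) (x : nat -> R) (m : nat) :
  \sum_(i < n) (if (i : nat) == m then x i else 0) = if (m < n)%N then x m else 0.
Proof.
case: ifP => hm.
  rewrite (bigD1 (Ordinal hm)) //= eqxx big1 ?addr0 // => i hi.
  case: eqP => // e; move: hi; suff -> : i = Ordinal hm by rewrite eqxx.
  by apply: val_inj.
rewrite big1 // => i _; case: eqP => // e; exfalso; move: (ltn_ord i); lia.
Qed.

Definition Ys (R : realFieldType) (k : nat) (x : nat -> R) (j : nat) : R :=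
  \sum_(i < 2 * k + 6) (if ((i <= j) && (j <= i + k))%N then x i else 0).

Lemma Ys0 (R : realFieldType) k (x : nat -> R) : Ys k x 0 = x 0.
Proof.
rewrite /Ys (eq_bigr (fun i : 'I_(2*k+6) => if (i:nat) == 0%N then x i else 0)).
  by rewrite sum_delta; case: ifP => //; lia.
move=> i _; case: ifP; case: ifP => //; lia.
Qed.

Lemma Ys_rec (R : realFieldType) k (x : nat -> R) j :
  (forall t, (2 * k + 6 <= t)%N -> x t = 0) ->
  Ys k x j.+1 = Ys k x j + x j.+1 - (if (k <= j)%N then x (j - k)%N else 0).
Proof.
move=> hx.
have -> : x j.+1 = \sum_(i < 2 * k + 6) (if (i : nat) == j.+1 then x i else 0).
  by rewrite sum_delta; case: ifP => // h; rewrite hx //; lia.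
have -> : (if (k <= j)%N then x (j - k)%N else 0) =
   \sum_(i < 2 * k + 6) (if (k <= j)%N && ((i : nat) == (j - k)%N) then x i else 0).
  case: ifP => hk.
    rewrite (eq_bigr (fun i : 'I_(2*k+6) => if (i:nat) == (j-k)%N then x i else 0)) //.
    by rewrite sum_delta; case: ifP => // h; rewrite hx //; lia.
  by rewrite big1.
rewrite /Ys -big_split -sumrB /=; apply: eq_bigr => i _.
(repeat case: ifP); intros; (first [ ring | (exfalso; lia) ]).
Qed.

Definition Hyps (R : realFieldType) (k : nat) (x Y : nat -> R) :=
  [/\ x 0%N = Y 0%N,
      (forall j, (0 < j <= k)%N -> x j = Y j - Y j.-1),
      (forall j, (k < j)%N -> x j = Y j - Y j.-1 + x (j - k.+1)%N) &
      (forall b, (b < 2 * k + 6)%N -> Y (b + k)%N = Y b)].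


Lemma HPm (R : realFieldType) k (Y : nat -> R) :
  (forall b, (b < 2 * k + 6)%N -> Y (b + k)%N = Y b) ->
  forall m a b, a = (b + m * k)%N -> (b + m * k < 3 * k + 6)%N -> Y a = Y b.
Proof.
move=> hP; elim=> [|m ih] a b -> h; first by rewrite mul0n addn0.
rewrite (_ : (b + m.+1 * k = (b + m * k) + k)%N); last lia.
rewrite hP; last lia.
by apply: ih => //; lia.
Qed.

Lemma chainA (R : realFieldType) k (x Y : nat -> R) : Hyps k x Y ->
  forall t, (3 <= t <= k - 1)%N -> x (t + 2 * k + 3)%N = Y (t + 3)%N - Y t.
Proof.
case=> h0 hB hA hP t ht.
have hA' : forall j p q, (k < j)%N -> p = j.-1 -> q = (j - k.+1)%N -> x j = Y j - Y p + x q.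
  by move=> j p q hj -> ->; apply: hA.
have hB' : forall j p, (0 < j <= k)%N -> p = j.-1 -> x j = Y j - Y p.
  by move=> j p hj ->; apply: hB.
have hm := HPm hP.
rewrite (hA' _ (t + 2 * k + 2)%N (t + k + 2)%N); try lia.
rewrite (hA' _ (t + k + 1)%N (t + 1)%N); try lia.
rewrite (hB' _ t); try lia.
rewrite (hm 2%N (t + 2 * k + 3)%N (t + 3)%N); try lia.
rewrite (hm 2%N (t + 2 * k + 2)%N (t + 2)%N); try lia.
rewrite (hm 1%N (t + k + 2)%N (t + 2)%N); try lia.
rewrite (hm 1%N (t + k + 1)%N (t + 1)%N); try lia.
ring.
Qed.

Lemma chainB (R : realFieldType) k (x Y : nat -> R) : Hyps k x Y -> (0 < k)%N ->
  forall r, (r <= 2)%N ->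
  x (r + 3 * k + 3)%N = Y (r + 3)%N - Y (r + 2)%N + Y (r + 2)%N - Y (r + 1)%N
     + Y (r + 1)%N - Y r + x r.
Proof.
case=> h0 hB hA hP kp r hr.
have hA' : forall j p q, (k < j)%N -> p = j.-1 -> q = (j - k.+1)%N -> x j = Y j - Y p + x q.
  by move=> j p q hj -> ->; apply: hA.
have hm := HPm hP.
rewrite (hA' _ (r + 3 * k + 2)%N (r + 2 * k + 2)%N); try lia.
rewrite (hA' _ (r + 2 * k + 1)%N (r + k + 1)%N); try lia.
rewrite (hA' _ (r + k)%N r); try lia.
rewrite (hm 3%N (r + 3 * k + 3)%N (r + 3)%N); try lia.
rewrite (hm 3%N (r + 3 * k + 2)%N (r + 2)%N); try lia.
rewrite (hm 2%N (r + 2 * k + 2)%N (r + 2)%N); try lia.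
rewrite (hm 2%N (r + 2 * k + 1)%N (r + 1)%N); try lia.
rewrite (hm 1%N (r + k + 1)%N (r + 1)%N); try lia.
rewrite (hm 1%N (r + k)%N r); try lia.
ring.
Qed.

Lemma Yzero (R : realFieldType) k (x Y : nat -> R) : Hyps k x Y -> (2 < k)%N ->
  (forall j, (2 * k + 6 <= j)%N -> x j = 0) ->
  ((k %% 3 != 1)%N \/ (Y 0%N = 0 /\ Y 1%N = 0)) ->
  forall t, (t < 3 * k + 6)%N -> Y t = 0.
Proof.
move=> H hk hx hc.
have H' := H; case: H' => h0 hB hA hP.
have relA : forall t, (3 <= t <= k - 1)%N -> Y (t + 3)%N = Y t.
  move=> t ht; have := chainA H ht; rewrite hx; last lia.
  move=> e; apply/eqP; rewrite -subr_eq0 -e //.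
have kp : (0 < k)%N by lia.
have Y3 : Y 3%N = 0.
  have := chainB H kp (r:=0) erefl; rewrite hx; last lia.
  rewrite h0 => e; change (0 + 3)%N with 3%N in e.
  change (0 + 2)%N with 2%N in e; change (0 + 1)%N with 1%N in e; lra.
have Y4 : Y 4%N = Y 0%N.
  have := chainB H kp (r:=1) erefl; rewrite hx; last lia.
  rewrite (hB 1%N); last lia.
  move=> e; change (1 + 3)%N with 4%N in e.
  change (1 + 2)%N with 3%N in e; change (1 + 1)%N with 2%N in e; simpl in e; lra.
have Y5 : Y 5%N = Y 1%N.
  have := chainB H kp (r:=2) erefl; rewrite hx; last lia.
  rewrite (hB 2%N); last lia.
  move=> e; change (2 + 3)%N with 5%N in e.
  change (2 + 2)%N with 4%N in e; change (2 + 1)%N with 3%N in e; simpl in e; lra.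
have pat : forall t, (3 <= t <= k + 2)%N ->
    [/\ (t %% 3 = 0)%N -> Y t = 0, (t %% 3 = 1)%N -> Y t = Y 0%N
      & (t %% 3 = 2)%N -> Y t = Y 1%N].
  move=> t; elim: t {-2}t (leqnn t) => [|s ih] t ts htk.
    lia.
  have [t3|t4] := ltnP t 6.
    have : t = 3%N \/ t = 4%N \/ t = 5%N by lia.
    by case=> [->|[->|->]]; split.
  have e : Y t = Y (t - 3)%N.
    have h := relA (t - 3)%N ltac:(lia).
    have e3 : (t - 3 + 3 = t)%N by lia.
    by rewrite e3 in h.
  have [i1 i2 i3] := ih (t - 3)%N ltac:(lia) ltac:(lia).
  split=> hm; rewrite e; [apply: i1 | apply: i2 | apply: i3]; lia.
have yk : Y k = Y 0%N by rewrite -(hP 0%N) //; lia.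
have yk1 : Y (k + 1)%N = Y 1%N by rewrite -(hP 1%N) ?(addnC 1%N) //; lia.
have yk2 : Y (k + 2)%N = Y 2%N by rewrite -(hP 2%N) ?(addnC 2%N) //; lia.
have [p0 p1 p2] := pat k ltac:(lia).
have [q0 q1 q2] := pat (k + 1)%N ltac:(lia).
have [r0 r1 r2] := pat (k + 2)%N ltac:(lia).
have Y01 : Y 0%N = 0 /\ Y 1%N = 0.
  have : (k %% 3 = 0 \/ k %% 3 = 1 \/ k %% 3 = 2)%N by lia.
  case=> [m|[m|m]].
  - have e0 : Y 0%N = 0 by rewrite -yk p0.
    split=> //; rewrite -yk1 q1 //; lia.
  - case: hc => //; rewrite m //.
  - have e1 : Y 1%N = 0 by rewrite -yk1 q0 //; lia.
    split=> //; rewrite -yk p2 //.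
case: Y01 => e0 e1.
have Y2 : Y 2%N = 0.
  have : ((k + 2) %% 3 = 0 \/ (k + 2) %% 3 = 1 \/ (k + 2) %% 3 = 2)%N by lia.
  case=> [m|[m|m]]; rewrite -yk2; [rewrite r0 // | rewrite r1 // | rewrite r2 //].
have small : forall t, (t <= k + 2)%N -> Y t = 0.
  move=> t ht; have [t3|t3] := ltnP t 3.
    have : t = 0%N \/ t = 1%N \/ t = 2%N by lia.
    by case=> [->|[->|->]].
  have [i1 i2 i3] := pat t ltac:(lia).
  have : (t %% 3 = 0 \/ t %% 3 = 1 \/ t %% 3 = 2)%N by lia.
  by case=> [m|[m|m]]; [rewrite i1 | rewrite i2 | rewrite i3].
move=> t; elim: t {-2}t (leqnn t) => [|s ih] t ts ht.
  by apply: small; lia.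
have [tk|tk] := leqP t (k + 2).
  by apply: small.
rewrite (_ : t = (t - k) + k)%N; last lia.
rewrite hP; last lia.
apply: ih; lia.
Qed.

Lemma xzero (R : realFieldType) k (x Y : nat -> R) : Hyps k x Y ->
  (forall j, (2 * k + 6 <= j)%N -> x j = 0) ->
  (forall t, (t < 3 * k + 6)%N -> Y t = 0) -> forall j, x j = 0.
Proof.
case=> h0 hB hA hP hx hY j.
elim: j {-2}j (leqnn j) => [|s ih] j js.
  have -> : j = 0%N by lia.
  rewrite h0 hY //; lia.
have [jb|jb] := leqP (2 * k + 6) j; first by apply: hx.
case: j js jb => [|j] js jb; first by rewrite h0 hY //; lia.
have [jk|jk] := leqP j.+1 k.
  rewrite hB //= hY; last lia.
  rewrite hY ?subrr //; lia.
rewrite hA // ih; last lia.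
rewrite /= hY; last lia.
rewrite hY ?subrr ?addr0 //; lia.
Qed.

Definition pat (R : realFieldType) (a b : R) (s : nat) : R :=
  if s == 0%N then a else if s == 1%N then b else if s == 2%N then 0
  else if (s %% 3 == 0)%N then 0 else if (s %% 3 == 1)%N then a else b.

Definition Yp (R : realFieldType) k (a b : R) (t : nat) : R := pat a b (t %% k).

Definition dl (R : realFieldType) k (a b : R) (j : nat) : R :=
  match j with 0 => Yp k a b 0 | j'.+1 => Yp k a b j'.+1 - Yp k a b j' end.

Definition Xs (R : realFieldType) k (a b : R) (j : nat) : R :=
  \sum_(m < (j %/ k.+1).+1) dl k a b (j - m * k.+1).

Lemma Xsmall (R : realFieldType) k (a b : R) j : (j <= k)%N -> Xs k a b j = dl k a b j.
Proof.
move=> hj; rewrite /Xs divn_small; last lia.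
by rewrite big_ord1 mul0n subn0.
Qed.

Lemma Xrec (R : realFieldType) k (a b : R) j : (k < j)%N ->
  Xs k a b j = dl k a b j + Xs k a b (j - k.+1).
Proof.
move=> hj; rewrite /Xs.
have e : j = ((j - k.+1) + 1 * k.+1)%N by lia.
have ed : (j %/ k.+1 = ((j - k.+1) %/ k.+1).+1)%N.
  by rewrite {1}e divnDMl // addn1.
rewrite ed big_ord_recl mul0n subn0; congr (_ + _).
apply: eq_bigr => i _; congr (dl _ _ _ _).
rewrite lift0 mulSn; lia.
Qed.

Lemma pat_ok (R : realFieldType) k (a b : R) : (k %% 3 = 1)%N -> (3 < k)%N ->
  forall t, (3 <= t <= k - 1)%N -> Yp k a b (t + 3) = Yp k a b t.
Proof.
move=> k3 k4 t ht; rewrite /Yp (modn_small (m:=t)); last lia.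
have [h|h] := ltnP (t + 3) k.
  rewrite modn_small //; rewrite /pat.
  by (repeat case: ifP); intros; first [ reflexivity | (exfalso; lia) ].
have e : (t + 3 = (t + 3 - k) + k)%N by lia.
rewrite e modnDr modn_small; last lia.
rewrite /pat.
by (repeat case: ifP); intros; first [ reflexivity | (exfalso; lia) ].
Qed.

Lemma Yp_per (R : realFieldType) k (a b : R) t : Yp k a b (t + k) = Yp k a b t.
Proof. by rewrite /Yp modnDr. Qed.

Lemma XHyps (R : realFieldType) k (a b : R) : Hyps k (Xs k a b) (Yp k a b).
Proof.
split.
- by rewrite Xsmall.
- by move=> [|j] hj //; rewrite Xsmall //; lia.
- move=> [|j] hj; first lia.
  by rewrite Xrec.
- by move=> t _; rewrite Yp_per.
Qed.

Lemma Xvanish (R : realFieldType) k (a b : R) : (k %% 3 = 1)%N -> (2 < k)%N ->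
  forall j, (2 * k + 6 <= j < 3 * k + 6)%N -> Xs k a b j = 0.
Proof.
move=> k3 k2 j hj.
have k4 : (3 < k)%N by lia.
have H := XHyps k a b.
have [hs|hs] := ltnP j (3 * k + 3).
  have e : j = ((j - 2 * k - 3) + 2 * k + 3)%N by lia.
  rewrite e (chainA H); last lia.
  by rewrite pat_ok ?subrr //; lia.
have : j = (0 + 3 * k + 3)%N \/ j = (1 + 3 * k + 3)%N \/ j = (2 + 3 * k + 3)%N by lia.
have Y3 : Yp k a b 3 = 0 by rewrite /Yp modn_small.
have Y4 : Yp k a b 4 = Yp k a b 0.
  rewrite /Yp mod0n; have [e|e] := eqVneq k 4%N.
    by rewrite e modnn.
  rewrite modn_small; last lia.
  by rewrite /pat.
have Y5 : Yp k a b 5 = Yp k a b 1.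
  rewrite /Yp (modn_small (m:=1)); last lia.
  have [e|e] := eqVneq k 4%N.
    by rewrite e.
  rewrite modn_small; last lia.
  by rewrite /pat.
have kp : (0 < k)%N by lia.
case=> [->|[->|->]]; rewrite (chainB H) //.
- rewrite Xsmall //= addn3 Y3; ring.
- rewrite Xsmall //= addn3 Y4; ring.
- rewrite Xsmall; last lia.
  rewrite /= addn3 Y5; ring.
Qed.

Lemma Ys_constr (R : realFieldType) k (a b : R) : (k %% 3 = 1)%N -> (2 < k)%N ->
  forall j, (j < 3 * k + 6)%N ->
  Ys k (fun t => if (t < 2 * k + 6)%N then Xs k a b t else 0) j = Yp k a b j.
Proof.
move=> k3 k2.
set x := fun t => _.
have xe : forall t, (t < 3 * k + 6)%N -> x t = Xs k a b t.
  move=> t ht; rewrite /x; case: ifP => // h.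
  by rewrite Xvanish //; lia.
have hx : forall t, (2 * k + 6 <= t)%N -> x t = 0.
  by move=> t ht; rewrite /x; case: ifP => //; lia.
elim=> [|j ih] hj.
  by rewrite Ys0 xe // Xsmall.
rewrite Ys_rec // ih; last lia.
rewrite xe //.
have [hk|hk] := leqP k j.
  rewrite xe; last lia.
  rewrite Xrec; last lia.
  rewrite subSS /=; ring.
rewrite Xsmall /=; last lia.
ring.
Qed.

Definition ext (R : realFieldType) k (u : 'rV[R]_(2 * k + 6)) (t : nat) : R :=
  oapp (u 0) 0 (insub t).

Lemma ext_ord (R : realFieldType) k (u : 'rV[R]_(2 * k + 6)) (i : 'I_(2 * k + 6)) :
  ext u i = u 0 i.
Proof. by rewrite /ext valK. Qed.

Lemma ext_big (R : realFieldType) k (u : 'rV[R]_(2 * k + 6)) t :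
  (2 * k + 6 <= t)%N -> ext u t = 0.
Proof. by move=> h; rewrite /ext insubF //; lia. Qed.

Lemma mulA_Ys (R : realFieldType) k (u : 'rV[R]_(2 * k + 6)) (j : 'I_(2 * k + 6)) :
  (u *m Amx R (2 * k + 6) k) 0 j = Ys k (ext u) j - Ys k (ext u) (j + k).
Proof.
rewrite mxE /Ys -sumrB; apply: eq_bigr => i _; rewrite mxE !ext_ord.
by (repeat case: ifP); intros; first [ ring | (exfalso; lia) ].
Qed.

Lemma kerHyps (R : realFieldType) k (x : nat -> R) :
  (forall t, (2 * k + 6 <= t)%N -> x t = 0) ->
  (forall j, (j < 2 * k + 6)%N -> Ys k x (j + k) = Ys k x j) ->
  Hyps k x (Ys k x).
Proof.
move=> hx hk; split.
- by rewrite Ys0.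
- move=> [|j] hj; first lia.
  rewrite Ys_rec //=; case: ifP; first lia.
  move=> _; ring.
- move=> [|j] hj; first lia.
  rewrite Ys_rec //=; case: ifP => h; last lia.
  rewrite subSS; ring.
- exact: hk.
Qed.

Definition i0 k : 'I_(2 * k + 6) := Ordinal (ltn_addl (2 * k) (isT : (0 < 6)%N)).
Definition i1 k : 'I_(2 * k + 6) := Ordinal (ltn_addl (2 * k) (isT : (1 < 6)%N)).

Lemma ker_uniq (R : realFieldType) k (w : 'rV[R]_(2 * k + 6)) : (2 < k)%N ->
  w *m Amx R (2 * k + 6) k = 0 ->
  ((k %% 3 != 1)%N \/ (w 0 (i0 k) = 0 /\ w 0 (i1 k) = 0)) -> w = 0.
Proof.
move=> k2 hw hc.
set x := ext w.
have hx : forall t, (2 * k + 6 <= t)%N -> x t = 0 by move=> t; apply: ext_big.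
have hk : forall j, (j < 2 * k + 6)%N -> Ys k x (j + k) = Ys k x j.
  move=> j hj; have := mulA_Ys w (Ordinal hj); rewrite hw mxE /= => e.
  by apply/eqP; rewrite eq_sym -subr_eq0 -e.
have H := kerHyps hx hk.
have hY := Yzero H k2 hx.
have hz : forall j, x j = 0.
  apply: (xzero H hx); apply: hY.
  case: hc => [h|[e0 e1]]; [by left | right].
  have x0 : x 0%N = 0 by rewrite -e0 -ext_ord.
  have x1 : x 1%N = 0 by rewrite -e1 -ext_ord.
  case: H => h0 hB _ _.
  split; first by rewrite -h0.
  have := hB 1%N ltac:(lia); rewrite x1 /= -h0 x0 => e; lra.
apply/rowP => i; rewrite mxE -ext_ord; exact: hz.
Qed.

Lemma Ys_eq (R : realFieldType) k (f g : nat -> R) j :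
  (forall t, f t = g t) -> Ys k f j = Ys k g j.
Proof. by move=> h; apply: eq_bigr => i _; rewrite h. Qed.

Lemma ker_exist (R : realFieldType) k (a b : R) : (k %% 3 = 1)%N -> (2 < k)%N ->
  exists v : 'rV[R]_(2 * k + 6), [/\ v *m Amx R (2 * k + 6) k = 0,
    v 0 (i0 k) = a & v 0 (i1 k) = b - a].
Proof.
move=> k3 k2.
set x := fun t => if (t < 2 * k + 6)%N then Xs k a b t else 0.
exists (\row_(i < 2 * k + 6) x i).
have ex : forall t, ext (\row_(i < 2 * k + 6) x i) t = x t.
  move=> t; rewrite /ext; case: insubP => [i hi ei|hn] /=.
    by rewrite mxE ei.
  by rewrite /x (negbTE hn).
split.
- apply/rowP => j; have hj := ltn_ord j; rewrite mulA_Ys mxE !(Ys_eq _ _ ex) !Ys_constr // ?Yp_per ?subrr //; lia.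
- rewrite mxE /x /=; case: ifP => h; last lia.
  by rewrite Xsmall //= /Yp mod0n.
- rewrite mxE /x /=; case: ifP => h; last lia.
  rewrite Xsmall //=; last lia.
  rewrite /Yp mod0n (modn_small (m:=1)) //; lia.
Qed.

Theorem theorem8p6 (R : realFieldType) (k : nat) (hk : (2 < k)%N) :
  Nnull R (2 * k + 6) k = (if k %% 3 == 1 then 2 else 0)%N.
Proof.
rewrite /Nnull -mxrank_ker.
set A := Amx R (2 * k + 6) k.
set K := kermx A.
have inK : forall w : 'rV_(2 * k + 6), (w <= K)%MS -> w *m A = 0.
  by move=> w; rewrite sub_kermx => /eqP.
pose E : 'M[R]_(2 * k + 6, 2) := \matrix_(i, j) (if (i : nat) == (j : nat) then 1 else 0).
have wE : forall (w : 'rV_(2 * k + 6)) (j : 'I_2), (w *m E) 0 j = ext w j.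
  move=> w j; rewrite mxE (eq_bigr (fun i : 'I_(2 * k + 6) =>
     if (i : nat) == (j : nat) then ext w i else 0)).
    rewrite sum_delta; case: ifP => // h; rewrite ext_big //; lia.
  move=> i _; rewrite mxE ext_ord; case: eqP => _; [exact: mulr1 | exact: mulr0].
have cap0 : (K :&: kermx E)%MS = 0.
  apply/row_matrixP => i; rewrite row0.
  set w := row i _.
  have wM : (w <= (K :&: kermx E))%MS := row_sub i _.
  have wK : (w <= K)%MS := submx_trans wM (capmxSl _ _).
  have wE0 : (w <= kermx E)%MS := submx_trans wM (capmxSr _ _).
  move: wE0; rewrite sub_kermx => /eqP wE0.
  apply: (ker_uniq hk (inK _ wK)); right; split.
    have := wE w 0; rewrite wE0 mxE => e.
    by rewrite -ext_ord /= -e.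
  have := wE w 1; rewrite wE0 mxE => e.
  by rewrite -ext_ord /= -e.
have rkK : \rank K = \rank (K *m E).
  by rewrite -(mxrank_mul_ker K E) cap0 mxrank0 addn0.
case: ifP => h3.
- apply/eqP; rewrite eqn_leq; apply/andP; split; rewrite rkK; first exact: rank_leq_col.
  rewrite -{1}(mxrank1 R 2); apply: mxrankS; apply/row_subP => i.
  have [v [vA v0 v1]] := ker_exist (if (i : nat) == 0%N then (1 : R) else 0) 1
    (eqP h3) hk.
  have vK : (v <= K)%MS by rewrite sub_kermx vA.
  have -> : row i 1%:M = v *m E.
    apply/rowP => j; rewrite wE !mxE.
    have e0 : ext v 0%N = v 0 (i0 k) by rewrite -ext_ord.
    have e1 : ext v 1%N = v 0 (i1 k) by rewrite -ext_ord.
    case: i v0 v1 => [[|[|i]] hi] v0 v1 //=; case: j => [[|[|j]] hj] //=;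
      rewrite ?e0 ?e1 ?v0 ?v1 //=; ring.
  exact: submxMr.
- apply/eqP; rewrite mxrank_eq0; apply/eqP/row_matrixP => i; rewrite row0.
  apply: (ker_uniq hk (inK _ (row_sub i K))); left; by rewrite h3.
Qed.
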